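(* Let $(\Omega,\mathcal F,\mu)$ be a measure space and $p\in[1,\infty]$. Then for every $k\geq 1$ the set $\mathscr G_{p,k}$ is proximinal in $L^p(\Omega,\mathcal F,\mu)$; that is, for every $f\in L^p(\Omega,\mathcal F,\mu)$ there exists $g\in\mathscr G_{p,k}$ with $\|f-g\|_p=\mathscr D_{p,k}(f)$.
   Context: All measures are assumed not identically zero. For $p\in[1,\infty]$ and $k\ge 1$, $\mathscr G_{p,k}$ denotes the set of functions of the form $\sum_{i=1}^l a_i\mathbf 1_{A_i}$ that belong to $L^p(\Omega,\mathcal F,\mu)$, where $l\le k$, $\{A_i\}_{1\le i\le l}$ is a measurable partition of $\Omega$ and $a_i\in\mathbb R$ (for $p<\infty$ this forces $a_i=0$ whenever $\mu(A_i)=\infty$). For $f\in L^p$, $\mathscr D_{p,k}(f)=\inf\{\|f-h\|_p:\ h\in\mathscr G_{p,k}\}$. A subset $K$ of a Banach space $X$ is proximinal if for every $x\in X$ the set $P_K(x)=\{y\in K:\ \|x-y\|=d(x,K)\}$ is nonempty. *)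

(* Defs.v *)
From HB Require Import structures.
From mathcomp Require Import all_boot all_order all_algebra.
From mathcomp Require Import all_classical all_reals all_analysis.
Set Implicit Arguments. Unset Strict Implicit. Unset Printing Implicit Defensive.
Import Order.TTheory GRing.Theory Num.Theory.
Local Open Scope classical_set_scope.
Local Open Scope ring_scope.

(** Elements of L^p are represented by measurable real functions with finite
    L^p norm (the statement is invariant under a.e. equality). *)
Definition inLp d (T : measurableType d) (R : realType)
  (mu : {measure set T -> \bar R}) (p : \bar R) (f : T -> R) : Prop :=
  measurable_fun [set: T] f /\ finite_norm mu p f.

Definition step_fun d (T : measurableType d) (R : realType) (k : nat)
  (h : T -> R) : Prop :=
  exists l : nat, exists A : 'I_l -> set T, exists a : 'I_l -> R,
    [/\ (l <= k)%N,
        (forall i, measurable (A i)),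
        trivIset [set: 'I_l] A,
        \bigcup_(i in [set: 'I_l]) A i = [set: T] &
        h = fun x => \sum_(i < l) a i * \1_(A i) x].

Definition Gpk d (T : measurableType d) (R : realType)
  (mu : {measure set T -> \bar R}) (p : \bar R) (k : nat) : set (T -> R) :=
  [set h | step_fun k h /\ inLp mu p h].

Definition Dpk d (T : measurableType d) (R : realType)
  (mu : {measure set T -> \bar R}) (p : \bar R) (k : nat) (f : T -> R) : \bar R :=
  ereal_inf [set Lnorm mu p (EFin \o (f \- h)) | h in Gpk mu p k].

(* Main.v *)
Require Import Defs.
From HB Require Import structures.
From mathcomp Require Import all_boot all_order all_algebra.
From mathcomp Require Import all_classical all_reals all_analysis.
From mathcomp Require Import ring lra.
From mathcomp Require Import measurable_realfun ess_sup_inf hoelder.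
Set Implicit Arguments. Unset Strict Implicit. Unset Printing Implicit Defensive.
Import Order.TTheory GRing.Theory Num.Theory numFieldNormedType.Exports.
Local Open Scope classical_set_scope.
Local Open Scope ring_scope.

Section stepc.
Context d (T : measurableType d) (R : realType) (k : nat) (f : T -> R).
Variable c : 'I_k -> R.

Definition Aset (i : 'I_k) : set T := [set x | (forall m, `|f x - c i| <= `|f x - c m|) /\
  (forall m : 'I_k, (m < i)%N -> `|f x - c i| < `|f x - c m|)].
Definition gfun x : R := \sum_(i < k) c i * \1_(Aset i) x.

Lemma exists_minimizer (F : 'I_k -> R) : (0 < k)%N -> exists i, forall m, F i <= F m.
Proof.
move=> k0; pose i0 := Ordinal k0.
exists [arg min_(i < i0) F i]%O.
by case: (arg_minP F (P:=xpredT) (i0:=i0)) => // i _ H m; apply: H.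
Qed.

Lemma Aset_cover : (0 < k)%N -> forall x, exists i, Aset i x.
Proof.
move=> k0 x.
pose P n := [exists i : 'I_k, (val i == n) && [forall m, `|f x - c i| <= `|f x - c m|]].
have HP : exists n, P n.
  have [i Hi] := exists_minimizer (fun i => `|f x - c i|) k0.
  exists (val i); apply/existsP; exists i; rewrite eqxx /=; apply/forallP => m; exact: Hi.
case: (ex_minnP HP) => n /existsP[i /andP[/eqP ein /forallP Hi]] nmin.
exists i; split => // m mi; rewrite ltNge; apply/negP => Hm.
have : P m by apply/existsP; exists m; rewrite eqxx /=; apply/forallP => m';
  exact: le_trans Hm (Hi m').
move/nmin; rewrite -ein leqNgt mi //.
Qed.

Lemma Aset_uniq i j x : Aset i x -> Aset j x -> i = j.
Proof.
case=> Hi1 Hi2 [Hj1 Hj2]; case: (ltngtP i j) => [ij|ji|/val_inj//].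
  by have := Hj2 _ ij; rewrite ltNge Hi1.
by have := Hi2 _ ji; rewrite ltNge Hj1.
Qed.

Lemma gfunE i x : Aset i x -> gfun x = c i.
Proof.
move=> Ai; rewrite /gfun (bigD1 i) //= indicE mem_set// mulr1 big1 ?addr0 // => j ji.
rewrite indicE memNset ?mulr0 // => Aj; move/eqP: ji; apply; exact: Aset_uniq Aj Ai.
Qed.

Lemma gfun_min : (0 < k)%N -> forall x m, `|f x - gfun x| <= `|f x - c m|.
Proof. by move=> k0 x m; have [i Ai] := Aset_cover k0 x; rewrite (gfunE Ai); case: Ai. Qed.

Lemma gfun_val : (0 < k)%N -> forall x, exists i, gfun x = c i.
Proof. by move=> k0 x; have [i Ai] := Aset_cover k0 x; exists i; exact: gfunE. Qed.

Hypothesis mf : measurable_fun setT f.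

Lemma meas_le (u v : T -> R) : measurable_fun setT u -> measurable_fun setT v ->
  measurable [set x | u x <= v x].
Proof.
move=> mu mv; have mt : measurable [set true] by []; have := measurable_realfun.measurable_fun_ler mu mv measurableT mt.
by rewrite setTI.
Qed.

Lemma meas_lt (u v : T -> R) : measurable_fun setT u -> measurable_fun setT v ->
  measurable [set x | u x < v x].
Proof.
move=> mu mv; have mt : measurable [set true] by []; have := measurable_realfun.measurable_fun_ltr mu mv measurableT mt.
by rewrite setTI.
Qed.

Lemma mdist (r : R) : measurable_fun setT (fun x => `|f x - r|).
Proof. apply: measurableT_comp => //; exact: measurable_realfun.measurable_funB. Qed.

Lemma measurable_Aset i : measurable (Aset i).
Proof.
have -> : Aset i = \bigcap_(m in [set: 'I_k]) [set x | `|f x - c i| <= `|f x - c m|] `&`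
   \bigcap_(m in [set m : 'I_k | (m < i)%N]) [set x | `|f x - c i| < `|f x - c m|].
  apply/seteqP; split => x /=.
    by case=> H1 H2; split => m /= Hm; [exact: H1|exact: H2].
  by case=> H1 H2; split => [m|m Hm]; [apply: H1|apply: H2].
apply: measurableI; apply: fin_bigcap_measurable; rewrite ?finite_finset // => m _.
  exact: meas_le (mdist _) (mdist _).
exact: meas_lt (mdist _) (mdist _).
Qed.

Lemma measurable_gfun : measurable_fun setT gfun.
Proof.
apply: measurable_sum => i; apply: measurable_realfun.measurable_funM => //.
exact: measurable_realfun.measurable_indic (measurable_Aset i).
Qed.

Lemma step_gfun : (0 < k)%N -> step_fun k gfun.
Proof.
move=> k0; exists k, Aset, c; split => //.
- exact: measurable_Aset.
- move=> i j _ _ [x [Ai Aj]]; exact: Aset_uniq Ai Aj.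
- apply/seteqP; split => // x _; have [i Ai] := Aset_cover k0 x; by exists i.
Qed.

End stepc.

Section lsc.
Context (R : realType).
Local Open Scope ereal_scope.

Definition evlb (F : nat -> \bar R) (y : \bar R) :=
  forall a : R, a%:E < y -> exists N, forall n, (N <= n)%N -> a%:E < F n.

Lemma le_of_lt_all (y z : \bar R) : (forall a : R, a%:E < y -> a%:E <= z) -> y <= z.
Proof.
case: z => [r| |] H; last 2 first.
- exact: leey.
- case: y H => [s| |] H //.
  + by have := H (s - 1)%R; rewrite lte_fin ltrBlDr ltrDl ltr01 leeNy_eq => /(_ isT).
  + by have := H 0%R (ltry _).
rewrite leNgt; apply/negP => ry; case: y ry H => [s| |] ry H //.
- have := H ((r + s) / 2)%R; rewrite !lte_fin !lee_fin; rewrite lte_fin in ry.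
  have h1 : ((r + s) / 2 < s)%R by lra.
  have h2 : ~~ ((r + s) / 2 <= r)%R by rewrite -ltNge; lra.
  by move=> /(_ h1); apply/negP.
- have := H (r + 1)%R (ltry _); rewrite lee_fin; apply/negP; rewrite -ltNge; lra.
Qed.

Lemma liminfE (u : (\bar R)^nat) : limn_einf u = ereal_sup (range (einfs u)).
Proof. by rewrite limn_einf_lim; apply/cvg_lim => //; exact: cvg_einfs_sup. Qed.

Lemma evlb_liminf F y : evlb F y -> y <= limn_einf F.
Proof.
move=> H; apply: le_of_lt_all => a /H [N HN].
rewrite liminfE.
have h : einfs F N <= ereal_sup (range (einfs F)) by apply: ereal_sup_ubound; exists N.
apply: le_trans h; apply: le_ereal_inf_tmp => _ [m /= Nm <-]; exact/ltW/HN.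
Qed.

Lemma liminf_le (F : (\bar R)^nat) B : (exists N, forall n, (N <= n)%N -> F n <= B) ->
  limn_einf F <= B.
Proof.
case=> N HN; rewrite liminfE; apply: ge_ereal_sup => _ [m _ <-].
apply: le_trans (HN (maxn m N) (leq_maxr _ _)).
by apply: ereal_inf_lbound; exists (maxn m N) => //=; exact: leq_maxl.
Qed.

Lemma evlb_pow F y (r : R) : (0 < r)%R -> (forall n, 0 <= F n) -> 0 <= y -> evlb F y ->
  evlb (fun n => F n `^ r) (y `^ r).
Proof.
move=> r0 F0 y0 H a ay.
have [a0|a0] := ltP a 0%R.
  by exists 0%N => n _; apply: lt_le_trans (poweR_ge0 _ _); rewrite lte_fin.
pose b := (a `^ (r^-1))%R.
have bK : (b `^ r = a)%R by rewrite /b -powRrM mulVf ?gt_eqF// powRr1.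
have b0 : (0 <= b)%R by exact: powR_ge0.
have by_ : b%:E < y.
  rewrite ltNge; apply/negP => yb.
  have := gt0_ler_poweR (ltW r0) _ _ yb.
  rewrite !in_itv /= y0 leey lee_fin b0 /= bK leey => /(_ isT isT) => ya.
  by move: (lt_le_trans ay ya); rewrite ltxx.
have [N HN] := H _ by_; exists N => n Nn; have := HN n Nn.
case: (F n) => [s| |] //= bs.
  rewrite lte_fin -bK; apply: gt0_ltr_powR => //; rewrite ?nnegrE //.
  by rewrite lte_fin in bs; rewrite (le_trans b0 (ltW bs)).
by rewrite gt_eqF // ltry.
Qed.

End lsc.

Section lsc2.
Context d (T : measurableType d) (R : realType) (mu : {measure set T -> \bar R}).
Local Open Scope ereal_scope.

Lemma Lnorm_lsc (p : \bar R) (F : nat -> T -> \bar R) (G : T -> \bar R) (B : \bar R) :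
  1 <= p ->
  (forall n, measurable_fun [set: T] (F n)) -> measurable_fun [set: T] G ->
  (forall n x, 0 <= F n x) -> (forall x, 0 <= G x) ->
  (forall x, evlb (fun n => F n x) (G x)) ->
  (exists N, forall n, (N <= n)%N -> Lnorm mu p (F n) <= B) ->
  Lnorm mu p G <= B.
Proof.
move=> p1 mF mG F0 G0 HFG [N HN].
have B0 : 0 <= B by exact: le_trans (Lnorm_ge0 mu p (F N)) (HN N (leqnn _)).
case: p p1 HN => [r r1 HN| _ HN|//]; last first.
  rewrite unlock /=; case: ifPn => // mu0.
  apply/ess_supP.
  have HF : \forall x \ae mu, forall n, (N <= n)%N -> `|F n x| <= B.
    apply: ae_foralln => n; case: (leqP N n) => Nn; last by apply: nearW.
    have := HN n Nn; rewrite unlock /= mu0 => /ess_supP; apply: filterS => x /= h _.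
    exact: h.
  apply: filterS HF => x /= HF; rewrite gee0_abs //.
  apply: le_of_lt_all => a /HFG [N' HN'].
  have := HN' (maxn N N') (leq_maxr _ _); rewrite -(gee0_abs (F0 _ x)) => h.
  exact: le_trans (ltW h) (HF _ (leq_maxl _ _)).
have r0 : (0 < r)%R by rewrite lee_fin in r1; lra.
have rr : (r * r^-1 = 1)%R by rewrite mulfV ?gt_eqF.
have eK (z : \bar R) : 0 <= z -> z = (z `^ r) `^ r^-1.
  by move=> z0; rewrite -poweRrM rr poweRe1.
rewrite (eK _ (Lnorm_ge0 _ _ _)) (eK B B0).
apply: gt0_ler_poweR.
- by rewrite invr_ge0 ltW.
- by rewrite in_itv /= poweR_ge0 leey.
- by rewrite in_itv /= poweR_ge0 leey.
rewrite poweR_Lnorm ?gt_eqF //.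
have mFr n : measurable_fun [set: T] (fun x => `|F n x| `^ r).
  apply: (@measurableT_comp _ _ _ _ _ _ (poweR ^~ r)); first exact: measurable_poweR.
  apply: measurableT_comp => //; exact: abse_measurable.
apply: (@le_trans _ _ (\int[mu]_x limn_einf (fun n => `|F n x| `^ r))).
  apply: ge0_le_integral => //.
  - by move=> x _; exact: poweR_ge0.
  - apply: (@measurableT_comp _ _ _ _ _ _ (poweR ^~ r)); first exact: measurable_poweR.
    apply: measurableT_comp => //; exact: abse_measurable.
  - rewrite /limn_einf; apply: (@measurableT_comp _ _ _ _ _ _ (-%E)); first exact: oppe_measurable.
    apply: measurable_fun_limn_esup => n /=.
    apply: (@measurableT_comp _ _ _ _ _ _ (-%E)); first exact: oppe_measurable.
    exact: mFr.
  - move=> x _; apply: evlb_liminf.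
    rewrite gee0_abs //; under eq_fun do rewrite gee0_abs //.
    exact: evlb_pow.
apply: le_trans (fatou _ _ _ _) _ => //.
- by move=> n x _; exact: poweR_ge0.
apply: liminf_le; exists N => n Nn.
rewrite -poweR_Lnorm ?gt_eqF //; apply: gt0_ler_poweR.
- exact: ltW.
- by rewrite in_itv /= Lnorm_ge0 leey.
- by rewrite in_itv /= B0 leey.
exact: HN.
Qed.

End lsc2.

Section subseqs.
Context (R : realType).

Definition conv (u : nat -> R) (l : R) :=
  forall e : R, 0 < e -> exists N, forall n, (N <= n)%N -> `|u n - l| < e.
Definition divg (u : nat -> R) := forall n, n%:R <= `|u n|.
Definition incr (s : nat -> nat) := forall n, (s n < s n.+1)%N.

Lemma incr_ge s : incr s -> forall n, (n <= s n)%N.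
Proof. by move=> hs; elim=> // n IH; apply: leq_ltn_trans IH (hs n). Qed.

Lemma incr_mono s : incr s -> forall m n, (m <= n)%N -> (s m <= s n)%N.
Proof.
move=> hs m n /subnK <-; elim: (n - m)%N => // j IH.
by rewrite addSn; apply: leq_trans IH (ltnW (hs _)).
Qed.

Lemma incr_comp s t : incr s -> incr t -> incr (s \o t).
Proof. by move=> hs ht n /=; apply: leq_trans (hs (t n)) (incr_mono hs (ht n)). Qed.

Lemma conv_sub u l t : conv u l -> incr t -> conv (u \o t) l.
Proof.
move=> hu ht e e0; have [N HN] := hu e e0; exists N => n Nn /=.
by apply: HN; apply: leq_trans Nn (incr_ge ht n).
Qed.

Lemma divg_sub u t : divg u -> incr t -> divg (u \o t).
Proof.
move=> hu ht n /=; apply: le_trans (hu (t n)).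
by rewrite ler_nat incr_ge.
Qed.

Lemma pick_incr (P : nat -> nat -> Prop) :
  (forall n N, exists m, (N <= m)%N /\ P n m) ->
  exists s, incr s /\ forall n, P n (s n).
Proof.
move=> H.
have /choice [ch Hch] : forall nN : nat * nat, exists m, (nN.2 <= m)%N /\ P nN.1 m.
  by move=> [n N]; exact: H.
pose s := fix s n := match n with 0 => ch (0, 0)%N | n'.+1 => ch (n'.+1, (s n').+1) end.
exists s; split.
  by move=> n /=; case: (Hch (n.+1, (s n).+1)).
by case=> [|n] /=; [case: (Hch (0, 0)%N) | case: (Hch (n.+1, (s n).+1))].
Qed.

Lemma cvgn_conv (v : nat -> R) : cvgn v -> exists l, conv v l.
Proof.
move=> hv; exists (limn v) => e e0.
move/cvgrPdist_lt : hv => /(_ e e0) [N _ HN].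
exists N => n Nn; rewrite distrC; exact: HN.
Qed.

Lemma coord_sub (u : nat -> R) :
  exists s, incr s /\ ((exists l, conv (u \o s) l) \/ divg (u \o s)).
Proof.
case: (pselect (exists M, forall N, exists m, (N <= m)%N /\ `|u m| <= M)) => [[M HM]|HM].
  have [s1 [hs1 Hs1]] := pick_incr (P := fun _ m => `|u m| <= M) (fun _ N => HM N).
  have bnd : bounded_fun (u \o s1).
    rewrite /bounded_near; near=> M'.
    move=> n _ /=; apply: le_trans (Hs1 n) _.
    near: M'; exact: nbhs_pinfty_ge (num_real M).
  have [f finc fcv] := bolzano_weierstrass bnd.
  have hf : incr f.
    move=> n; have := finc n.+1 n; rewrite !leEnat => e.
    by rewrite ltnNge e ltnn.
  exists (s1 \o f); split; first exact: incr_comp.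
  by left; apply: cvgn_conv.
have H2 : forall n N, exists m, (N <= m)%N /\ n%:R <= `|u m|.
  move=> n N; case: (pselect (exists m, (N <= m)%N /\ n%:R <= `|u m|)) => // Hno.
  exfalso; apply: HM; exists n%:R => N'; exists (maxn N N'); split; first exact: leq_maxr.
  rewrite leNgt; apply/negP => h; apply: Hno; exists (maxn N N'); split; first exact: leq_maxl.
  exact: ltW.
have [s [hs Hs]] := pick_incr H2.
by exists s; split => //; right.
Unshelve. all: end_near. Qed.

Lemma subseq_all k (c : nat -> 'I_k -> R) :
  exists s, incr s /\ forall i, (exists l, conv (fun n => c (s n) i) l) \/ divg (fun n => c (s n) i).
Proof.
suff H : forall j, exists s, incr s /\ forall i : 'I_k, (i < j)%N ->
    (exists l, conv (fun n => c (s n) i) l) \/ divg (fun n => c (s n) i).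
  by have [s [hs Hs]] := H k; exists s; split => // i; apply: Hs.
elim=> [|j [s [hs Hs]]]; first by exists id; split.
case: (ltnP j k) => jk; last first.
  exists s; split => // i ij; apply: Hs; exact: leq_trans (ltn_ord i) jk.
have [t [ht Ht]] := coord_sub (fun n => c (s n) (Ordinal jk)).
exists (s \o t); split; first exact: incr_comp.
move=> i; rewrite ltnS leq_eqVlt => /orP[/eqP ij|ij].
  have -> : i = Ordinal jk by apply: val_inj.
  exact: Ht.
case: (Hs i ij) => [[l hl]|hd]; [left; exists l|right].
  exact: (conv_sub hl ht).
exact: (divg_sub hd ht).
Qed.

End subseqs.

Section main.
Context d (T : measurableType d) (R : realType) (mu : {measure set T -> \bar R})
  (p : \bar R) (k : nat).
Hypotheses (mu0 : (0 < mu [set: T])%E) (p1 : (1 <= p)%E) (k0 : (0 < k)%N).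
Variable f : T -> R.
Hypotheses (mf : measurable_fun [set: T] f) (ff : finite_norm mu p f).
Local Open Scope ereal_scope.

Lemma Lnorm_eqabs (u v : T -> R) : (forall x, `|u x| = `|v x|)%R ->
  Lnorm mu p (EFin \o u) = Lnorm mu p (EFin \o v).
Proof.
move=> h; rewrite -Lnorm_abse -[RHS]Lnorm_abse; congr Lnorm; apply/funext => x /=.
by rewrite h.
Qed.

Lemma mabsE (u : T -> R) : measurable_fun [set: T] u ->
  measurable_fun [set: T] (abse \o (EFin \o u)).
Proof.
move=> mu_; apply: measurableT_comp; first exact: abse_measurable.
exact/measurable_EFinP.
Qed.

Lemma mEabs (u : T -> R) : measurable_fun [set: T] u ->
  measurable_fun [set: T] (EFin \o (fun x => `|u x|)%R).
Proof. by move=> mu_; apply/measurable_EFinP; exact: measurableT_comp. Qed.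

Lemma Lnorm_mono (u v : T -> R) : measurable_fun [set: T] u -> measurable_fun [set: T] v ->
  (forall x, `|u x| <= `|v x|)%R -> Lnorm mu p (EFin \o u) <= Lnorm mu p (EFin \o v).
Proof.
move=> mu_ mv h; rewrite -Lnorm_abse -[X in _ <= X]Lnorm_abse.
apply: (@Lnorm_lsc _ _ _ mu p (fun _ => abse \o (EFin \o v))).
- exact: p1.
- by move=> _; exact: mabsE.
- exact: mabsE.
- by move=> n x; exact: abse_ge0.
- by move=> x; exact: abse_ge0.
- by move=> x a ha; exists 0%N => n _ /=; apply: lt_le_trans ha _; rewrite /= lee_fin h.
- by exists 0%N.
Qed.

Lemma mdiff (c : 'I_k -> R) : measurable_fun [set: T] (f \- gfun f c)%R.
Proof. apply: measurable_funB => //; exact: measurable_gfun. Qed.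

Lemma Gpk_gfun (c : 'I_k -> R) : Lnorm mu p (EFin \o (f \- gfun f c)%R) < +oo -> Gpk mu p k (gfun f c).
Proof.
move=> h; split; first exact: step_gfun.
split; first exact: measurable_gfun.
rewrite /finite_norm.
have -> : gfun f c = (f \+ (fun x => gfun f c x - f x))%R.
  by apply/funext => x /=; rewrite addrC subrK.
have mg : measurable_fun [set: T] (fun x => gfun f c x - f x)%R.
  by apply: measurable_funB => //; exact: measurable_gfun.
apply: le_lt_trans (eminkowski mu mf mg p1) _.
rewrite lte_add_pinfty //; rewrite (@Lnorm_eqabs _ (f \- gfun f c)%R) //.
by move=> x; rewrite distrC.
Qed.

Lemma gfun0E x : gfun f (fun _ : 'I_k => 0%R) x = 0%R.
Proof. by have [i ->] := gfun_val f (fun _ : 'I_k => 0%R) k0 x. Qed.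

Lemma zero_in : Gpk mu p k (gfun f (fun _ : 'I_k => 0%R)).
Proof.
apply: Gpk_gfun; rewrite (@Lnorm_eqabs _ f) //.
by move=> x /=; rewrite gfun0E subr0.
Qed.

Lemma D_ge0 : 0 <= Dpk mu p k f.
Proof. by apply: le_ereal_inf_tmp => _ [h _ <-]; exact: Lnorm_ge0. Qed.

Lemma D_lty : Dpk mu p k f < +oo.
Proof.
apply: le_lt_trans (ereal_inf_lbound _) _.
  by exists (gfun f (fun _ : 'I_k => 0%R)); [exact: zero_in|reflexivity].
rewrite (@Lnorm_eqabs _ f) //.
by move=> x /=; rewrite gfun0E subr0.
Qed.

Lemma D_fin : Dpk mu p k f \is a fin_num.
Proof. by rewrite fin_numElt D_lty andbT (lt_le_trans _ D_ge0) // ltNy0. Qed.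

Lemma approx n : exists c : 'I_k -> R,
  Lnorm mu p (EFin \o (f \- gfun f c)%R) <= Dpk mu p k f + (n.+1%:R^-1)%:E.
Proof.
have e0 : (0 < n.+1%:R^-1 :> R)%R by rewrite invr_gt0.
have [z [h [[l [A [a [lk mA tA cA hE]]]] [mh fh]] <-] hx] := lb_ereal_inf_adherent e0 D_fin.
have l0 : (0 < l)%N.
  case: l lk A a mA tA cA hE => // _ A a _ _ cA _.
  have : mu [set: T] = 0.
    rewrite -cA (_ : \bigcup_(i in [set: 'I_0]) A i = set0) ?measure0 //.
    by apply/seteqP; split => // x0 [[]].
  by move=> h0; move: mu0; rewrite h0 ltxx.
pose i0 := Ordinal l0.
exists (fun i => a (insubd i0 (val i))).
apply: le_trans (ltW hx); apply: Lnorm_mono.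
- exact: mdiff.
- by apply: measurable_funB.
move=> x.
have [j _ Ajx] : (\bigcup_(i in [set: 'I_l]) A i) x by rewrite cA.
have hx' : h x = a j.
  rewrite hE (bigD1 j) //= indicE mem_set // mulr1 big1 ?addr0 // => i ij.
  rewrite indicE memNset ?mulr0 // => Aix; move/eqP: ij; apply.
  by apply: tA => //; exists x.
rewrite /= hx'.
have jk : (j < k)%N by exact: leq_trans (ltn_ord j) lk.
have := gfun_min f (fun i => a (insubd i0 (val i))) k0 x (Ordinal jk).
by rewrite /= (_ : insubd i0 (val j) = j) // valKd.
Qed.

Lemma Lnorm_pinfty : Lnorm mu p (cst +oo) = +oo.
Proof.
case: p p1 => [r r1| _|//].
  have r0 : (0 < r)%R by rewrite lee_fin in r1; lra.
  rewrite unlock /=.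
  rewrite gt_eqF //.
  rewrite (_ : (fun _ => +oo) = cst +oo) // integral_cst // gt0_mulye //.
  by rewrite poweRyr // invr_neq0 // gt_eqF.
rewrite unlock /= mu0.
rewrite (_ : abse \o cst +oo = cst +oo); first by rewrite ess_sup_cst.
by apply/funext.
Qed.

Lemma far_bound (y a : R) : exists N, forall n (c : R), (N <= n)%N -> (n%:R <= `|c|)%R ->
  (a < `|y - c|)%R.
Proof.
exists (Num.trunc (`|a| + `|y|)).+1 => n c Nn hc.
have h1 := truncnS_gt (`|a| + `|y|).
have h2 : ((Num.trunc (`|a| + `|y|)).+1%:R <= n%:R :> R)%R by rewrite ler_nat.
have h3 : (`|c| <= `|y - c| + `|y|)%R.
  by rewrite distrC; apply: le_trans (ler_normD _ _); rewrite subrK.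
have h4 : (a <= `|a|)%R by exact: ler_norm.
lra.
Qed.

Lemma main_exists : exists2 g, Gpk mu p k g &
  Lnorm mu p (EFin \o (f \- g)%R) = Dpk mu p k f.
Proof.
set D := Dpk mu p k f.
have /choice [cn Hcn] := approx.
have [s [hs Hs]] := subseq_all cn.
pose F n := EFin \o (fun x => `|f x - gfun f (cn (s n)) x|)%R.
have mF n : measurable_fun [set: T] (F n) by exact: mEabs (mdiff _).
have F0 n x : 0 <= F n x by rewrite /F /= lee_fin.
have HFB N : forall n, (N <= n)%N -> Lnorm mu p (F n) <= D + (N.+1%:R^-1)%:E.
  move=> n Nn; rewrite /F (@Lnorm_eqabs _ (f \- gfun f (cn (s n)))%R); last first.
    by move=> x; rewrite normr_id.
  apply: le_trans (Hcn (s n)) _; rewrite leeD2l // lee_fin.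
  rewrite lef_pV2 ?posrE // ler_nat ltnS.
  exact: leq_trans Nn (incr_ge hs n).
case: (pselect (exists i, exists l, conv (fun n => cn (s n) i) l)) => [[i0 [l0 _]]|Hno]; last first.
  exfalso.
  have Hd : forall i, divg (fun n => cn (s n) i).
    by move=> i; case: (Hs i) => // hc; exfalso; apply: Hno; exists i.
  have := @Lnorm_lsc _ _ _ mu p F (cst +oo) (D + (0.+1%:R^-1)%:E) p1 mF
    (measurable_cst _) F0 (fun _ => leey _) _ (ex_intro _ 0%N (HFB 0%N)).
  rewrite Lnorm_pinfty leye_eq => H.
  have : D + (0.+1%:R^-1)%:E \is a fin_num by rewrite fin_numD D_fin.
  rewrite fin_numE => /andP[_]; rewrite -(eqP (H _)) ?eqxx //.
  move=> x a _; have [N HN] := far_bound (f x) a.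
  exists N => n Nn; rewrite /F /= lte_fin.
  have [j ->] := gfun_val f (cn (s n)) k0 x.
  exact: HN (Hd j n).
have /choice [L HL] : forall i, exists l,
    (exists l', conv (fun n => cn (s n) i) l') -> conv (fun n => cn (s n) i) l.
  move=> i; case: (pselect (exists l', conv (fun n => cn (s n) i) l')) => [[l' hl']|hn].
    by exists l'.
  by exists 0%R.
pose g := gfun f L.
have HG : Lnorm mu p (EFin \o (f \- g)%R) <= D.
  rewrite (@Lnorm_eqabs _ (fun x => `|f x - g x|)%R); last by move=> x; rewrite normr_id.
  apply/lee_addgt0Pr => e e0.
  pose N := Num.trunc (e^-1).
  have hN : (N.+1%:R^-1 <= e)%R.
    have h1 := truncnS_gt (e^-1).
    rewrite -[X in (_ <= X)%R]invrK lef_pV2 ?posrE ?invr_gt0 //; exact: ltW.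
  apply: (@le_trans _ _ (D + (N.+1%:R^-1)%:E)); last by rewrite leeD2l // lee_fin.
  apply: (@Lnorm_lsc _ _ _ mu p F) => //.
  - exact: mEabs (mdiff _).
  - by move=> x; rewrite /= lee_fin.
  - move=> x a ha; rewrite /= lte_fin in ha.
    have Hj : forall j, exists N, forall n, (N <= n)%N -> (a < `|f x - cn (s n) j|)%R.
      move=> j; case: (Hs j) => [[l hl]|hd].
        have hLj := HL j (ex_intro _ l hl).
        have hm : (a < `|f x - L j|)%R := lt_le_trans ha (gfun_min f L k0 x j).
        have hpos : (0 < `|f x - L j| - a)%R by rewrite subr_gt0.
        have [N' HN'] := hLj _ hpos.
        exists N' => n Nn; have := HN' n Nn.
        have tri : (`|f x - L j| <= `|f x - cn (s n) j| + `|cn (s n) j - L j|)%R.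
          by apply: le_trans (ler_normD _ _); rewrite addrA subrK.
        move=> h5; lra.
      have [N' HN'] := far_bound (f x) a.
      by exists N' => n Nn; exact: HN' (hd n).
    have /choice [Nf HNf] := Hj.
    exists (\max_(j < k) Nf j)%N => n Nn; rewrite /F /= lte_fin.
    have [j ->] := gfun_val f (cn (s n)) k0 x.
    by apply: HNf; apply: leq_trans Nn; exact: leq_bigmax.
  - by exists N; exact: HFB.
have Hg : Gpk mu p k g.
  apply: Gpk_gfun; apply: le_lt_trans HG _; exact: D_lty.
exists g => //; apply/le_anti; rewrite HG /=.
by apply: ereal_inf_lbound; exists g.
Qed.

End main.

Theorem theorem1p1 (d : measure_display) (T : measurableType d) (R : realType)
  (mu : {measure set T -> \bar R}) (p : \bar R) (k : nat) :
  mu [set: T] != 0%E -> (1 <= p)%E -> (1 <= k)%N ->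
  forall f : T -> R, inLp mu p f ->
  exists2 g : T -> R, Gpk mu p k g & Lnorm mu p (EFin \o (f \- g)) = Dpk mu p k f.
Proof.
move=> hmu p1 k1 f [mf ff].
have mu0 : (0 < mu [set: T])%E by rewrite lt0e hmu measure_ge0.
exact: (@main_exists d T R mu p k mu0 p1 k1 f mf ff).
Qed.
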